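(* Let $n\ge k\ge 2$ and let $\Sigma\subset\mathbb{R}$ be a finite set. If $M$ is a $k\times n$ real matrix with all entries in $\Sigma$ such that every $k\times k$ submatrix formed by $k$ of its columns is nonsingular, then $|\Sigma|\ge\sqrt{n/k}$. *)

(* Defs.v *)
From mathcomp Require Export reals.
From mathcomp Require Export all_boot all_order all_algebra.
Set Implicit Arguments. Unset Strict Implicit. Unset Printing Implicit Defensive.

(* Main.v *)
Require Import Defs.
Import Order.TTheory GRing.Theory Num.Theory.
Local Open Scope ring_scope.

Lemma det_two_const (R : fieldType) (k : nat) (A : 'M[R]_k) (i0 i1 : 'I_k) (a b : R) :
  i0 != i1 -> (forall j, A i0 j = a) -> (forall j, A i1 j = b) -> \det A = 0.
Proof.
move=> ne h0 h1; apply/eqP/det0P.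
have [a0|an0] := eqVneq a 0.
  exists (delta_mx 0 i0).
    apply/eqP => /matrixP/(_ 0 i0); rewrite !mxE !eqxx /=.
    by move/eqP; rewrite oner_eq0.
  by rewrite -rowE; apply/rowP => j; rewrite !mxE h0 a0.
exists (b *: delta_mx 0 i0 - a *: delta_mx 0 i1).
  apply/eqP => /matrixP/(_ 0 i1); rewrite !mxE !eqxx /= eq_sym (negbTE ne).
  by rewrite mulr0 mulr1 sub0r => /eqP; rewrite oppr_eq0 (negbTE an0).
rewrite mulmxBl -!scalemxAl -!rowE; apply/rowP => j; rewrite !mxE h0 h1.
by rewrite mulrC subrr.
Qed.

Theorem claim1p4 (R : realType) (k n : nat) (Sigma : seq R)
  (M : 'M[R]_(k, n)) :
  (2 <= k)%N -> (k <= n)%N -> uniq Sigma ->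
  (forall i j, M i j \in Sigma) ->
  (forall f : 'I_k -> 'I_n, injective f -> \det (colsub f M) != 0) ->
  Num.sqrt (n%:R / k%:R : R) <= (size Sigma)%:R.
Proof.
move=> k2 kn _ hS hdet.
set s := size Sigma.
have k0 : (0 < k)%N by apply: leq_trans k2.
pose i0 : 'I_k := Ordinal k0.
pose i1 : 'I_k := Ordinal k2.
have ix : forall x, x \in Sigma -> (index x Sigma < s)%N by move=> x; rewrite index_mem.
pose g (j : 'I_n) : 'I_s * 'I_s :=
  (Ordinal (ix _ (hS i0 j)), Ordinal (ix _ (hS i1 j))).
have fib : forall p, (#|[pred j | g j == p]| < k)%N.
  move=> p; rewrite ltnNge; apply/negP => hk.
  pose f (i : 'I_k) : 'I_n := enum_val (widen_ord hk i).
  have finj : injective f.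
    by move=> x y /enum_val_inj /(congr1 val) /= /val_inj.
  have fp : forall i, g (f i) == p by move=> i; exact: (enum_valP (widen_ord hk i)).
  have /negP := hdet f finj; apply.
  apply/eqP; apply: (@det_two_const _ _ _ i0 i1 (nth 0 Sigma p.1) (nth 0 Sigma p.2)).
  - by [].
  - move=> j; rewrite mxE; have := fp j; rewrite /g => /eqP <- /=.
    by rewrite nth_index.
  - move=> j; rewrite mxE; have := fp j; rewrite /g => /eqP <- /=.
    by rewrite nth_index.
have hn : (n <= s * s * k.-1)%N.
  have -> : n = \sum_(j : 'I_n) 1%N by rewrite sum1_card card_ord.
  rewrite (partition_big g xpredT) //=.
  apply: leq_trans (_ : \sum_(p : 'I_s * 'I_s) k.-1 <= _)%N.
    apply: leq_sum => p _; rewrite sum1_card.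
    by rewrite -ltnS prednK // (leq_trans _ (fib p)) // ltnS subset_leq_card //; apply/subsetP=> x; rewrite !inE.
  by rewrite sum_nat_const card_prod !card_ord.
have kR : (0 : R) < k%:R by rewrite ltr0n.
rewrite -(ger0_norm (ler0n R s)) -sqrtr_sqr ler_sqrt; last by rewrite sqr_ge0.
rewrite ler_pdivrMr // -natrX -natrM ler_nat.
apply: leq_trans hn _; rewrite -mulnn leq_mul2l; apply/orP; right.
by rewrite leq_pred.
Qed.
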